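(* Let $p, q \in \mathbb{R}$ with $q \le p$. Then $$\frac{\mathscr{P}_p(v)}{\mathscr{P}_q(v)} \le \exp\bigg( \frac{p-q}{8} \Big(\ln\Big(\frac{\max v}{\min v}\Big)\Big)^2 \bigg)$$ for every $n \in \mathbb{N}$ and every $v \in \mathbb{R}_+^n$. Moreover, the constant $\frac{p-q}{8}$ is sharp: if $C \in \mathbb{R}$ is such that $\frac{\mathscr{P}_p(v)}{\mathscr{P}_q(v)} \le \exp\big( C (\ln(\max v/\min v))^2\big)$ holds for all $n\in\mathbb{N}$ and all $v \in \mathbb{R}_+^n$, then $C \ge \frac{p-q}{8}$.
   Context: For $v = (v_1,\dots,v_n) \in \mathbb{R}_+^n$ (vectors of positive reals), the power mean of order $p \in \mathbb{R}$ is $\mathscr{P}_p(v) = \big(\frac{v_1^p + \cdots + v_n^p}{n}\big)^{1/p}$ for $p \neq 0$ and $\mathscr{P}_0(v) = \sqrt[n]{v_1 \cdots v_n}$. Here $\max v$ and $\min v$ denote the largest and smallest entry of $v$. *)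

(* Defs.v *)
From mathcomp Require Import all_boot all_order all_algebra.
From mathcomp Require Import all_classical all_reals all_analysis.
Set Implicit Arguments. Unset Strict Implicit. Unset Printing Implicit Defensive.
Import Order.TTheory GRing.Theory Num.Theory.
Local Open Scope ring_scope.

Definition power_mean (R : realType) (n : nat) (p : R) (v : 'I_n.+1 -> R) : R :=
  if p == 0 then (\prod_(i < n.+1) v i) `^ (n.+1%:R)^-1
  else ((n.+1%:R)^-1 * \sum_(i < n.+1) (v i) `^ p) `^ p^-1.

Definition vmax (R : realType) (n : nat) (v : 'I_n.+1 -> R) : R :=
  \big[Num.max/v ord0]_(i < n.+1) v i.
Definition vmin (R : realType) (n : nat) (v : 'I_n.+1 -> R) : R :=
  \big[Num.min/v ord0]_(i < n.+1) v i.

(* Main.v *)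
Require Import Defs.
From mathcomp Require Import all_boot all_order all_algebra.
From mathcomp Require Import all_classical all_reals all_analysis.
From mathcomp Require Import ring lra.
Import Order.TTheory GRing.Theory Num.Theory.
Local Open Scope ring_scope.

Local Open Scope classical_set_scope.
Set Implicit Arguments. Unset Strict Implicit.
Section S.
Variable R : realType.

Lemma ndecr_of (F G : R -> R) :
  (forall x : R, is_derive x (1:R) F (G x)) -> forall a b, a <= b ->
  (forall x, a <= x <= b -> 0 <= G x) -> F a <= F b.
Proof.
move=> dF a b ab hG.
have dv : forall x : R, derivable F x 1 by move=> x; have [] := dF x.
apply: (@ger0_derive1_ndecr R F a b) => //.
- move=> x; rewrite in_itv /= => /andP[h1 h2].
  rewrite derive1E (@derive_val _ _ _ _ _ _ _ (dF x)); apply: hG; rewrite !ltW //.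
- by apply: derivable_within_continuous => x _.
Qed.

Lemma nincr_of (F G : R -> R) :
  (forall x : R, is_derive x (1:R) F (G x)) -> forall a b, a <= b ->
  (forall x, a <= x <= b -> G x <= 0) -> F b <= F a.
Proof.
move=> dF a b ab hG.
have dv : forall x : R, derivable F x 1 by move=> x; have [] := dF x.
apply: (@ler0_derive1_nincr R F a b) => //.
- move=> x; rewrite in_itv /= => /andP[h1 h2].
  rewrite derive1E (@derive_val _ _ _ _ _ _ _ (dF x)); apply: hG; rewrite !ltW //.
- by apply: derivable_within_continuous => x _.
Qed.

Lemma nonneg_of_convex (F G H : R -> R) :
  (forall x : R, is_derive x (1:R) F (G x)) -> (forall x : R, is_derive x (1:R) G (H x)) ->
  (forall x, 0 <= H x) -> F 0 = 0 -> G 0 = 0 -> forall x, 0 <= F x.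
Proof.
move=> dF dG hH F0 G0 x.
have Gmono : forall a b, a <= b -> G a <= G b.
  by move=> a b ab; apply: (ndecr_of dG ab) => y _.
case: (lerP 0 x) => hx.
  rewrite -F0; apply: (ndecr_of dF hx) => y /andP[h1 _].
  by rewrite -G0; apply: Gmono.
rewrite -F0; apply: (nincr_of dF (ltW hx)) => y /andP[_ h2].
by rewrite -G0; apply: Gmono.
Qed.
End S.

Section T.
Variable R : realType.
Variable th : R.
Hypothesis th0 : 0 <= th.
Hypothesis th1 : th <= 1.
Definition D (u : R) := 1 - th + th * expR u.
Lemma Dpos u : 0 < D u.
Proof.
rewrite /D; have e := expR_gt0 u.
case: (ltrP th 1) => h.
  have : 0 <= th * expR u by rewrite mulr_ge0 // ltW.
  lra.
have -> : th = 1 by apply/eqP; rewrite eq_le th1 h.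
by rewrite subrr add0r mul1r.
Qed.
Lemma dD (u : R) : is_derive u (1:R) D (th * expR u).
Proof. rewrite /D; apply: is_derive_eq; by rewrite add0r mul1r. Qed.
Lemma dlnD (u : R) : is_derive u (1:R) (fun v => ln (D v)) ((D u)^-1 * (th * expR u)).
Proof. exact: (is_derive1_comp (is_derive1_ln (Dpos u)) (dD u)). Qed.
Lemma dDV (u : R) : is_derive u (1:R) (fun v => (D v)^-1) (- (D u) ^- 2 *: (th * expR u)).
Proof. apply: is_deriveV; [exact: lt0r_neq0 (Dpos u)| exact: dD]. Qed.

Definition F (u : R) := th * u + u ^+ 2 / 8 - ln (D u).
Definition G (u : R) := th + u / 4 - th * expR u * (D u)^-1.
Definition H (u : R) := 1 / 4 - th * (1 - th) * expR u / (D u) ^+ 2.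

Lemma dF u : is_derive u (1:R) F (G u).
Proof.
rewrite /F.
have h1 := dlnD u.
apply: is_derive_eq.
have E : forall a b : R, a *: b = a * b by [].
rewrite /G !scaler0 !E add0r !mulr1.
have := Dpos u; move=> /lt0r_neq0 ?; by field.
Qed.

Lemma dG u : is_derive u (1:R) G (H u).
Proof.
rewrite /G.
have h1 := dDV u.
apply: is_derive_eq.
have E : forall a b : R, a *: b = a * b by [].
rewrite /H !E.
have := Dpos u; move=> /lt0r_neq0 ?. rewrite /D. field. exact.
Qed.
Lemma Hge0 u : 0 <= H u.
Proof.
have hD := Dpos u; have hD0 := lt0r_neq0 hD.
have -> : H u = ((1 - th) - th * expR u) ^+ 2 / (4 * (D u) ^+ 2).
  rewrite /H; move: hD0; rewrite /D => hD0; field; exact hD0.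
by apply: divr_ge0; [exact: sqr_ge0 | apply: mulr_ge0; [by [] | exact: sqr_ge0]].
Qed.

Lemma F0 : F 0 = 0.
Proof. by rewrite /F /D expR0 mulr0 expr0n /= mul0r addr0 mulr1 subrK ln1 subrr. Qed.
Lemma G0 : G 0 = 0.
Proof. by rewrite /G /D expR0 mul0r addr0 mulr1 subrK invr1 mulr1 subrr. Qed.

Lemma phi_bound u : ln (1 - th + th * expR u) <= th * u + u ^+ 2 / 8.
Proof.
have := nonneg_of_convex dF dG Hge0 F0 G0 u.
rewrite /F /D subr_ge0 //.
Qed.
End T.


Section H.
Variable R : realType.
Lemma chord (A B l : R) : 0 <= l -> l <= 1 ->
  expR ((1 - l) * A + l * B) <= (1 - l) * expR A + l * expR B.
Proof.
move=> l0 l1; set m := (1 - l) * A + l * B.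
have key : forall Z : R, expR m * (1 + (Z - m)) <= expR Z.
  move=> Z; have -> : expR Z = expR m * expR (Z - m) by rewrite -expRD addrC subrK.
  by rewrite ler_wpM2l ?expR_ge0 // expR_ge1Dx.
have hA := key A; have hB := key B.
have e0 := expR_gt0 m.
have : 0 <= (1 - l) * (expR A - expR m * (1 + (A - m))) + l * (expR B - expR m * (1 + (B - m))).
  apply: addr_ge0; apply: mulr_ge0; lra.
have -> : (1 - l) * (expR A - expR m * (1 + (A - m))) + l * (expR B - expR m * (1 + (B - m)))
   = (1 - l) * expR A + l * expR B - expR m by rewrite /m; ring.
lra.
Qed.
End H.

Section Hoeff.
Variable R : realType.

Lemma sum_pos (m : nat) (w : 'I_m.+1 -> R) : (forall i, 0 < w i) -> 0 < \sum_i w i.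
Proof.
move=> hw; rewrite big_ord_recl; apply: (lt_le_trans (hw ord0)); rewrite lerDl.
by apply: sumr_ge0 => i _; apply: ltW.
Qed.

Lemma hoeff (m : nat) (w x : 'I_m.+1 -> R) (a b s : R) :
  (forall i, 0 < w i) -> (forall i, a <= x i <= b) ->
  \sum_i w i * expR (s * x i) <=
  (\sum_i w i) * expR (s * ((\sum_i w i * x i) / \sum_i w i) + s ^+ 2 * (b - a) ^+ 2 / 8).
Proof.
move=> hw hx.
set W := \sum_i w i; set X := \sum_i w i * x i.
have W0 : 0 < W by apply: sum_pos.
have ab : a <= b by case/andP: (hx ord0) => h1 h2; apply: le_trans h2.
have hXa : a * W <= X.
  rewrite /X /W mulr_sumr; apply: ler_sum => i _.
  case/andP: (hx i) => h1 h2; rewrite [a * _]mulrC ler_wpM2l // ltW //.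
have hXb : X <= b * W.
  rewrite /X /W mulr_sumr; apply: ler_sum => i _.
  case/andP: (hx i) => h1 h2; rewrite [b * _]mulrC ler_wpM2l // ltW //.
case: (ltrP a b) => hab; last first.
  have ba : b = a by apply/eqP; rewrite eq_le hab ab.
  have xa : forall i, x i = a.
    by move=> i; apply/eqP; rewrite eq_le; case/andP: (hx i) => h1 h2; rewrite h1 -ba h2.
  have -> : X = a * W by rewrite /X /W mulr_sumr; apply: eq_bigr => i _; rewrite xa mulrC.
  rewrite ba subrr expr0n /= mulr0 mul0r addr0 mulfK ?(lt0r_neq0 W0).
  2: done. by rewrite /W mulr_suml; apply: ler_sum => i _; rewrite xa lexx.
set L := b - a.
have L0 : 0 < L by rewrite /L subr_gt0; exact hab.
have L0' : L != 0 by exact: (lt0r_neq0 L0).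
set Ea := expR (s * a); set Eu := expR (s * L).
have Eb : expR (s * b) = Ea * Eu by rewrite /Ea /Eu -expRD /L; congr expR; ring.
have step1 : \sum_i w i * expR (s * x i) <=
    \sum_i (Ea * w i + (expR (s * b) - Ea) / L * (w i * x i - a * w i)).
  apply: ler_sum => i _.
  have [h1 h2] : a <= x i /\ x i <= b by case/andP: (hx i).
  set l := (x i - a) / L.
  have l0 : 0 <= l by apply: divr_ge0; lra.
  have l1 : l <= 1 by rewrite ler_pdivrMr // mul1r /L; lra.
  have -> : s * x i = (1 - l) * (s * a) + l * (s * b) by rewrite /l /L; field.
  have -> : Ea * w i + (expR (s * b) - Ea) / L * (w i * x i - a * w i)
      = w i * ((1 - l) * Ea + l * expR (s * b)) by rewrite /l /Ea; field.
  have hc := chord (s * a) (s * b) l0 l1.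
  by rewrite (ler_wpM2l (ltW (hw i))) /Ea.
have eq1 : \sum_i (Ea * w i + (expR (s * b) - Ea) / L * (w i * x i - a * w i))
    = Ea * W + (expR (s * b) - Ea) / L * (X - a * W).
  rewrite big_split /= -mulr_sumr -mulr_sumr sumrB -mulr_sumr //.
set th := (X / W - a) / L.
have th0 : 0 <= th.
  apply: divr_ge0; last lra.
  rewrite subr_ge0 ler_pdivlMr //.
have th1 : th <= 1.
  rewrite /th ler_pdivrMr // mul1r /L lerBlDr subrK ler_pdivrMr //.
have hphi := phi_bound th0 th1 (s * L).
have Dp : 0 < 1 - th + th * Eu.
  by have := Dpos th0 th1 (s * L); rewrite /D.
have hD : 1 - th + th * Eu <= expR (th * (s * L) + (s * L) ^+ 2 / 8).
  by rewrite -[X in X <= _]lnK ?ler_expR // posrE.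
apply: (le_trans step1); rewrite eq1.
have -> : Ea * W + (expR (s * b) - Ea) / L * (X - a * W) = W * Ea * (1 - th + th * Eu).
  rewrite Eb /th; field; apply/andP; split; apply: lt0r_neq0 => //.
have -> : s * (X / W) + s ^+ 2 * L ^+ 2 / 8 = s * a + (th * (s * L) + (s * L) ^+ 2 / 8).
  rewrite /th; field; apply/andP; split; apply: lt0r_neq0 => //.
rewrite expRD -mulrA /Ea (ler_wpM2l (ltW W0)) //. by rewrite (ler_wpM2l (expR_ge0 _)).
Qed.
End Hoeff.

Section Comb.
Variable R : realType.

Lemma combine (Lam mu : R -> R) (c p q : R) : q <= p ->
  (forall r t, Lam t <= Lam r + (t - r) * mu r + (t - r) ^+ 2 * c) -> Lam 0 = 0 ->
  (if p == 0 then mu 0 else Lam p / p) - (if q == 0 then mu 0 else Lam q / q) <= (p - q) * c.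
Proof.
move=> qp K L0.
have K0 : forall t, Lam t <= t * mu 0 + t ^+ 2 * c.
  by move=> t; have := K 0 t; rewrite L0 add0r !subr0.
have Bpos : forall t, 0 < t -> Lam t / t <= mu 0 + t * c.
  move=> t t0; rewrite ler_pdivrMr //; have := K0 t; rewrite expr2; nra.
have Bneg : forall t, t < 0 -> mu 0 + t * c <= Lam t / t.
  move=> t t0; rewrite ler_ndivlMr //; have := K0 t; rewrite expr2; nra.
case: (ltrgtP p 0) => hp; case: (ltrgtP q 0) => hq.
-
  have K1 := K p q; have K2 := K p 0; rewrite L0 !expr2 in K1 K2.
  have hpq : 0 < p * q by nra.
  have -> : Lam p / p - Lam q / q = (q * Lam p - p * Lam q) / (p * q).
    by field; rewrite (ltr0_neq0 hq) (ltr0_neq0 hp).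
  rewrite ler_pdivrMr //.
  have h1 : 0 <= - p * (Lam p + (q - p) * mu p + (q - p) * (q - p) * c - Lam q).
    apply: mulr_ge0; lra.
  have h2 : 0 <= (p - q) * (Lam p + (0 - p) * mu p + (0 - p) * (0 - p) * c - 0).
    apply: mulr_ge0; lra.
  nra.
- lra.
- move: qp; rewrite hq => qp; lra.
-
  have := Bpos p hp; have := Bneg q hq; lra.
-
  have K1 := K q p; have K2 := K q 0; rewrite L0 !expr2 in K1 K2.
  have hpq : 0 < p * q by nra.
  have -> : Lam p / p - Lam q / q = (q * Lam p - p * Lam q) / (p * q).
    by field; rewrite (lt0r_neq0 hq) (lt0r_neq0 hp).
  rewrite ler_pdivrMr //.
  have h1 : 0 <= q * (Lam q + (p - q) * mu q + (p - q) * (p - q) * c - Lam p).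
    apply: mulr_ge0; lra.
  have h2 : 0 <= (p - q) * (Lam q + (0 - q) * mu q + (0 - q) * (0 - q) * c - 0).
    apply: mulr_ge0; lra.
  nra.
- rewrite hq; have := Bpos p hp; lra.
- rewrite hp; have := Bneg q hq; lra.
- move: qp; rewrite hp => qp; lra.
- rewrite hp hq; lra.
Qed.
End Comb.

Section Main.
Variable R : realType.

Lemma vmax_ge (n : nat) (v : 'I_n.+1 -> R) i : v i <= vmax v.
Proof. exact: le_bigmax. Qed.
Lemma vmin_le (n : nat) (v : 'I_n.+1 -> R) i : vmin v <= v i.
Proof. exact: bigmin_le. Qed.
Lemma vmin_gt0 (n : nat) (v : 'I_n.+1 -> R) : (forall i, 0 < v i) -> 0 < vmin v.
Proof.
move=> hv; rewrite /vmin; apply: (big_ind (fun y => 0 < y)); [exact: hv | | by move=> i _; exact: hv].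
by move=> y z hy hz; rewrite lt_min hy hz.
Qed.

Definition Ssum (n : nat) (v : 'I_n.+1 -> R) (t : R) := \sum_(i < n.+1) expR (t * ln (v i)).
Definition Lam (n : nat) (v : 'I_n.+1 -> R) (t : R) := ln (Ssum v t / n.+1%:R).
Definition mu (n : nat) (v : 'I_n.+1 -> R) (r : R) :=
  (\sum_(i < n.+1) expR (r * ln (v i)) * ln (v i)) / Ssum v r.
Definition lpm (n : nat) (v : 'I_n.+1 -> R) (t : R) :=
  if t == 0 then mu v 0 else Lam v t / t.

Lemma Ssum_gt0 (n : nat) (v : 'I_n.+1 -> R) t : 0 < Ssum v t.
Proof. by apply: sum_pos => i; exact: expR_gt0. Qed.

Lemma pm_eq (n : nat) (v : 'I_n.+1 -> R) t : (forall i, 0 < v i) ->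
  power_mean t v = expR (lpm v t).
Proof.
move=> hv; rewrite /power_mean /lpm.
have N0 : 0 < (n.+1%:R : R) by rewrite ltr0n.
case: eqP => [_|t0].
  rewrite /mu /powR.
  have -> : \prod_(i < n.+1) v i = expR (\sum_(i < n.+1) ln (v i)).
    rewrite expR_sum; apply: eq_bigr => i _; rewrite lnK // posrE; exact: hv.
  rewrite expR_eq0 /= expRK.
  have -> : Ssum v 0 = n.+1%:R.
    rewrite /Ssum (eq_bigr (fun=> 1)); last by move=> i _; rewrite mul0r expR0.
    by rewrite sumr_const card_ord.
  congr expR; rewrite mulrC; congr (_ / _); apply: eq_bigr => i _.
  by rewrite mul0r expR0 mul1r.
have -> : \sum_(i < n.+1) v i `^ t = Ssum v t.
  apply: eq_bigr => i _; rewrite /powR gt_eqF //; exact: hv.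
rewrite /powR mulf_eq0 invr_eq0 gt_eqF //= gt_eqF //; last by rewrite Ssum_gt0.
by rewrite /Lam mulrC [Ssum v t / _]mulrC.
Qed.

Lemma K_ineq (n : nat) (v : 'I_n.+1 -> R) r t : (forall i, 0 < v i) ->
  Lam v t <= Lam v r + (t - r) * mu v r + (t - r) ^+ 2 * ((ln (vmax v / vmin v)) ^+ 2 / 8).
Proof.
move=> hv.
have m0 := vmin_gt0 hv.
have M0 : 0 < vmax v := lt_le_trans (hv ord0) (vmax_ge v ord0).
have hx : forall i, ln (vmin v) <= ln (v i) <= ln (vmax v).
  move=> i; rewrite !ler_ln ?posrE ?hv // vmin_le vmax_ge //.
have H := hoeff (w := fun i => expR (r * ln (v i))) (t - r) (fun i => expR_gt0 _) hx.
have e1 : \sum_i expR (r * ln (v i)) * expR ((t - r) * ln (v i)) = Ssum v t.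
  by apply: eq_bigr => i _; rewrite -expRD; congr expR; ring.
rewrite e1 -/(Ssum v r) in H.
have -> : ln (vmax v / vmin v) = ln (vmax v) - ln (vmin v).
  by rewrite lnM ?posrE ?invr_gt0 // lnV ?posrE.
have N0 : 0 < (n.+1%:R : R)^-1 by rewrite invr_gt0 ltr0n.
have LE : forall u, Lam v u = ln (Ssum v u) + ln ((n.+1%:R : R)^-1).
  by move=> u; rewrite /Lam lnM // posrE Ssum_gt0.
have hl : ln (Ssum v t) <= ln (Ssum v r * expR ((t - r) * mu v r +
       (t - r) ^+ 2 * (ln (vmax v) - ln (vmin v)) ^+ 2 / 8)).
  by rewrite ler_ln // posrE ?Ssum_gt0 // mulr_gt0 // ?Ssum_gt0 // expR_gt0.
rewrite lnM ?posrE ?Ssum_gt0 ?expR_gt0 // expRK in hl.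
rewrite !LE; lra.
Qed.

End Main.

Section Cosh.
Variable R : realType.

Lemma dexpN (z : R) : is_derive z (1:R) (fun u : R => expR (- u)) (- expR (- z)).
Proof.
have h := is_derive1_comp (is_derive_expR (- z)) (@is_deriveNid _ _ z 1).
apply: is_derive_eq; rewrite mulrN1 //.
Qed.

Definition cF (z : R) := expR z + expR (- z) - 2 - z ^+ 2.
Definition cG (z : R) := expR z - expR (- z) - 2 * z.
Definition cH (z : R) := expR z + expR (- z) - 2.

Lemma dcF z : is_derive z (1:R) cF (cG z).
Proof.
rewrite /cF; have h := dexpN z; apply: is_derive_eq.
have E : forall a b : R, a *: b = a * b by [].
rewrite /cG !E; ring.
Qed.
Lemma dcG z : is_derive z (1:R) cG (cH z).
Proof.
rewrite /cG; have h := dexpN z; apply: is_derive_eq.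
have E : forall a b : R, a *: b = a * b by [].
rewrite /cH !E; ring.
Qed.
Lemma cH_ge0 z : 0 <= cH z.
Proof.
rewrite /cH expRN.
have e := expR_gt0 z.
have -> : expR z + (expR z)^-1 - 2 = (expR z - 1) ^+ 2 / expR z.
  by field; apply: lt0r_neq0.
by apply: divr_ge0; [exact: sqr_ge0 | exact: ltW].
Qed.

Lemma cosh_ge (z : R) : 2 + z ^+ 2 <= expR z + expR (- z).
Proof.
have := nonneg_of_convex dcF dcG cH_ge0 _ _ z.
rewrite /cF; move=> h; (suff: 0 <= expR z + expR (- z) - 2 - z ^+ 2 by lra); apply: h.
  by rewrite /cF oppr0 expR0; ring.
by rewrite /cG oppr0 expR0; ring.
Qed.

Lemma ln1D_ge (w : R) : 0 <= w -> w - w ^+ 2 <= ln (1 + w).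
Proof.
move=> w0.
have p : 0 < 1 + w by lra.
have h := expR_ge1Dx (- ln (1 + w)).
rewrite expRN lnK ?posrE // in h.
have h2 : w / (1 + w) <= ln (1 + w).
  have -> : w / (1 + w) = 1 - (1 + w)^-1 by field; apply: lt0r_neq0.
  lra.
apply: le_trans h2.
rewrite ler_pdivlMr //.
have : 0 <= w ^+ 3 by apply: exprn_ge0.
have -> : (w - w ^+ 2) * (1 + w) = w - w ^+ 3 by ring.
lra.
Qed.
End Cosh.

Section Sharp.
Variable R : realType.
Definition tv (y : R) : 'I_2 -> R := fun i => if i == ord0 then expR (- y) else expR y.

Lemma tv_pos y i : 0 < tv y i.
Proof. by rewrite /tv; case: ifP => _; exact: expR_gt0. Qed.

Lemma tv_max y : 0 <= y -> vmax (tv y) = expR y.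
Proof.
move=> y0; rewrite /vmax big_ord_recl big_ord_recl big_ord0 /tv /=.
have h : expR (- y) <= expR y by rewrite ler_expR; lra.
by rewrite (max_l h) (max_r h).
Qed.

Lemma tv_min y : 0 <= y -> vmin (tv y) = expR (- y).
Proof.
move=> y0; rewrite /vmin big_ord_recl big_ord_recl big_ord0 /tv /=.
have h : expR (- y) <= expR y by rewrite ler_expR; lra.
by rewrite (min_r h) minxx.
Qed.

Lemma tv_L y : 0 <= y -> ln (vmax (tv y) / vmin (tv y)) = 2 * y.
Proof.
by move=> y0; rewrite tv_max // tv_min // -expRN -expRD expRK opprK; ring.
Qed.

Lemma tv_mu0 y : mu (tv y) 0 = 0.
Proof.
by rewrite /mu big_ord_recl big_ord_recl big_ord0 /tv /= !mul0r expR0 !mul1r !expRK addr0 addNr mul0r.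
Qed.

Lemma tv_Lam0 y : Lam (tv y) 0 = 0.
Proof.
rewrite /Lam /Ssum big_ord_recl big_ord_recl big_ord0 !mul0r expR0 addr0.
by rewrite divff ?ln1 // pnatr_eq0.
Qed.

Lemma tv_Lam y t : Lam (tv y) t = ln ((expR (- (t * y)) + expR (t * y)) / 2).
Proof.
rewrite /Lam /Ssum big_ord_recl big_ord_recl big_ord0 /tv /= !expRK addr0.
by rewrite mulrN.
Qed.

Lemma tv_Lam_lb y t : (t * y) ^+ 2 / 2 - (t * y) ^+ 4 / 4 <= Lam (tv y) t.
Proof.
rewrite tv_Lam; set z := t * y.
have h1 := cosh_ge z.
have w0 : 0 <= z ^+ 2 / 2 by apply: divr_ge0; [exact: sqr_ge0 | by []].
have h2 := ln1D_ge w0.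
apply: le_trans (_ : ln (1 + z ^+ 2 / 2) <= _).
  have e : (z ^+ 2 / 2) ^+ 2 = z ^+ 4 / 4 by field.
  by rewrite e in h2.
rewrite ler_ln ?posrE; last 2 first.
- lra.
- have := expR_gt0 z; have := expR_gt0 (- z); lra.
lra.
Qed.

Lemma tv_Lam_ub y t : 0 <= y -> Lam (tv y) t <= (t * y) ^+ 2 / 2.
Proof.
move=> y0; have := K_ineq (v := tv y) 0 t (tv_pos y).
rewrite tv_Lam0 tv_mu0 tv_L // !subr0.
have -> : t ^+ 2 * ((2 * y) ^+ 2 / 8) = (t * y) ^+ 2 / 2 by field.
lra.
Qed.
End Sharp.

Section Fin.
Variable R : realType.

Lemma g_bounds (y t : R) : 0 <= y ->
  t * y ^+ 2 / 2 - `|t| ^+ 3 * y ^+ 4 / 4 <= lpm (tv y) t /\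
  lpm (tv y) t <= t * y ^+ 2 / 2 + `|t| ^+ 3 * y ^+ 4 / 4.
Proof.
move=> y0; rewrite /lpm.
have lb := tv_Lam_lb y t; have ub := tv_Lam_ub t y0.
have e2 : (t * y) ^+ 2 / 2 = t ^+ 2 * y ^+ 2 / 2 by rewrite exprMn.
have e4 : (t * y) ^+ 4 / 4 = t ^+ 4 * y ^+ 4 / 4 by rewrite exprMn.
rewrite e2 e4 in lb ub.
have q4 : 0 <= t ^+ 4 * y ^+ 4 / 4.
  by apply: divr_ge0 => //; apply: mulr_ge0; apply: exprn_even_ge0.
case: (ltrgtP t 0) => ht.
- rewrite ltr0_norm // ler_ndivlMr // ler_ndivrMr //.
  have -> : (t * y ^+ 2 / 2 - (- t) ^+ 3 * y ^+ 4 / 4) * t = t ^+ 2 * y ^+ 2 / 2 + t ^+ 4 * y ^+ 4 / 4 by field.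
  have -> : (t * y ^+ 2 / 2 + (- t) ^+ 3 * y ^+ 4 / 4) * t = t ^+ 2 * y ^+ 2 / 2 - t ^+ 4 * y ^+ 4 / 4 by field.
  split; lra.
- rewrite gtr0_norm // ler_pdivlMr // ler_pdivrMr //.
  have -> : (t * y ^+ 2 / 2 - t ^+ 3 * y ^+ 4 / 4) * t = t ^+ 2 * y ^+ 2 / 2 - t ^+ 4 * y ^+ 4 / 4 by field.
  have -> : (t * y ^+ 2 / 2 + t ^+ 3 * y ^+ 4 / 4) * t = t ^+ 2 * y ^+ 2 / 2 + t ^+ 4 * y ^+ 4 / 4 by field.
  split; lra.
- rewrite ht tv_mu0 normr0 expr0n /= !mul0r subr0 addr0; split; exact: lexx.
Qed.

Lemma part1 (p q : R) (hqp : q <= p) :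
  (forall (n : nat) (v : 'I_n.+1 -> R), (forall i, 0 < v i) ->
     power_mean p v / power_mean q v
       <= expR ((p - q) / 8%:R * (ln (vmax v / vmin v)) ^+ 2)).
Proof.
move=> n v hv.
rewrite !pm_eq // -expRN -expRD ler_expR.
have L0 : Lam v 0 = 0.
  rewrite /Lam /Ssum (eq_bigr (fun=> 1)); last by move=> i _; rewrite mul0r expR0.
  by rewrite sumr_const card_ord divff ?ln1 // pnatr_eq0.
have := combine hqp (fun r t => K_ineq r t hv) L0.
rewrite /lpm.
set c := (ln (vmax v / vmin v)) ^+ 2.
move=> h; apply: le_trans h _.
rewrite /c; lra.
Qed.

Lemma part2 (p q : R) (C : R) :
     (forall (n : nat) (v : 'I_n.+1 -> R), (forall i, 0 < v i) ->
        power_mean p v / power_mean q v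
          <= expR (C * (ln (vmax v / vmin v)) ^+ 2)) ->
     (p - q) / 8%:R <= C.
Proof.
move=> HC.
set A := `|p| ^+ 3 + `|q| ^+ 3.
have A0 : 0 <= A by apply: addr_ge0; apply: exprn_ge0.
have key : forall y : R, 0 < y -> (p - q) / 8 - C <= A * y ^+ 2 / 16.
  move=> y y0.
  have := HC 1%N (tv y) (tv_pos y).
  move=> h; have pe := fun t => pm_eq t (tv_pos y).
  rewrite !pe -expRN -expRD ler_expR (tv_L (ltW y0)) in h.
  have [lp up] := g_bounds p (ltW y0); have [lq uq] := g_bounds q (ltW y0).
  have y2 : 0 < 4 * y ^+ 2 by apply: mulr_gt0 => //; apply: exprn_gt0.
  rewrite -(ler_pM2r y2).
  have -> : ((p - q) / 8 - C) * (4 * y ^+ 2) = (p - q) * y ^+ 2 / 2 - C * (4 * y ^+ 2) by field.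
  have -> : A * y ^+ 2 / 16 * (4 * y ^+ 2) = A * y ^+ 4 / 4 by field.
  have e : C * (2 * y) ^+ 2 = C * (4 * y ^+ 2) by ring.
  rewrite e in h.
  have -> : A * y ^+ 4 / 4 = `|p| ^+ 3 * y ^+ 4 / 4 + `|q| ^+ 3 * y ^+ 4 / 4 by rewrite /A; field.
  have -> : (p - q) * y ^+ 2 / 2 = p * y ^+ 2 / 2 - q * y ^+ 2 / 2 by field.
  lra.
rewrite leNgt; apply/negP => hlt.
set d := (p - q) / 8 - C.
have d0 : 0 < d by rewrite /d; lra.
have A1 : 0 < A + 1 by lra.
set y := Num.min 1 (d / (A + 1)).
have y0 : 0 < y by rewrite lt_min ltr01 divr_gt0.
have y1 : y <= 1 by rewrite ge_min lexx.
have yd : y <= d / (A + 1) by rewrite ge_min lexx orbT.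
have := key y y0; rewrite -/d => hk.
have hy2 : y ^+ 2 <= y by rewrite expr2 ler_piMl // ltW.
have hAy : A * y <= d.
  apply: (le_trans (ler_wpM2l A0 yd)).
  rewrite mulrA ler_pdivrMr //; nra.
have : A * y ^+ 2 <= A * y by rewrite ler_wpM2l.
lra.
Qed.

End Fin.

Local Close Scope classical_set_scope.
Theorem mainTheorem4 (R : realType) (p q : R) (hqp : q <= p) :
  (forall (n : nat) (v : 'I_n.+1 -> R), (forall i, 0 < v i) ->
     power_mean p v / power_mean q v
       <= expR ((p - q) / 8%:R * (ln (vmax v / vmin v)) ^+ 2))
  /\
  (forall C : R,
     (forall (n : nat) (v : 'I_n.+1 -> R), (forall i, 0 < v i) ->
        power_mean p v / power_mean q v
          <= expR (C * (ln (vmax v / vmin v)) ^+ 2)) ->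
     (p - q) / 8%:R <= C).
Proof.
split; first exact: part1.
move=> C; exact: part2.
Qed.
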